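(* Let $M$ be a sharp, integral monoid and $\phi:\Gamma\to\Gamma'$ a harmonic, non-degenerate morphism of $M$-metrised graphs. Then for every effective divisor $D'\in\operatorname{Div}(\Gamma')$ we have $r(\phi^*(D'))\ge r(D')$.
   Context: Monoids are commutative, sharp (only unit $0$), integral (cancellative), with groupification $M^{gp}$; $\langle m\rangle=\{km:k\in\mathbb Z\}\subseteq M^{gp}$ and for $x=km$, $m\ne0$, $x/m:=k$. A graph is $(X,r,i)$, $X$ finite, $r$ idempotent, $i$ an involution, $i(x)=x\iff r(x)=x$; vertices $V$ = fixed points, half-edges $H=X\setminus V$, edges $\{e,i(e)\}$ joining $r(e),r(i(e))$, $H_v=\{e\in H:r(e)=v\}$; graphs are connected. An $M$-metrised graph adds $l:X\to M$ with $l(i(x))=l(x)$, $l(x)=0\iff x\in V$. Divisors: elements of the free abelian group on $V$, partially ordered pointwise; $\operatorname{Div}^k_+$ = effective divisors of degree $k$. $\operatorname{PL}(\Gamma)=\{g:V\to M^{gp}: g(r(e))-g(r(i(e)))\in\langle l(e)\rangle\ \forall e\in H\}$; $\Delta(g)=\sum_{v}\big(\sum_{e\in H_v}\frac{g(v)-g(r(i(e)))}{l(e)}\big)[v]$; principal divisors $\operatorname{Prin}(\Gamma)=\Delta(\operatorname{PL}(\Gamma))$; $D\sim D'$ iff $D-D'\in\operatorname{Prin}(\Gamma)$; $|D|=\{E\ge0: E\sim D\}$; rank $r(D)=\max\{k\in\mathbb Z:|D-F|\ne\emptyset\text{ for all }F\in\operatorname{Div}^k_+(\Gamma)\}$. A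 morphism $\phi:\Gamma\to\Gamma'$ is a map $X\to X'$ with $\phi(V)\subseteq V'$; if $\phi(e)=e'\in H'$ then $\phi(r(e))=r'(e')$, $\phi(r(i(e)))=r'(i'(e'))$, $l'(e')\in\langle l(e)\rangle$; if $\phi(e)=v'\in V'$ then $\phi(r(e))=\phi(r(i(e)))=v'$. Slope $\mu_\phi(e)=l'(\phi(e))/l(e)$ if $\phi(e)\in H'$, else $0$; $m_{\phi,v}(e')=\sum_{e\in H_v,\phi(e)=e'}\mu_\phi(e)$ for $e'\in H'_{\phi(v)}$; harmonic: independent of $e'$ for each $v$, common value $m_\phi(v)$; non-degenerate: $m_\phi(v)>0$ for all $v$. $\phi^*(D')=\sum_{v}D'(\phi(v))m_\phi(v)[v]$. *)

(* Defs.v *)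
From HB Require Import structures.
From mathcomp Require Import all_boot all_order all_algebra.
From Stdlib Require Import ClassicalEpsilon.
Set Implicit Arguments. Unset Strict Implicit. Unset Printing Implicit Defensive.
Import Order.TTheory GRing.Theory Num.Theory.
Local Open Scope ring_scope.

(* ---------- Monoids ----------
   A sharp, integral (cancellative), commutative monoid M is represented by
   its image inside its groupification M^gp = G : a predicate M on an abelian
   group G which contains 0, is closed under +, is sharp (only unit 0),
   and generates G (every element of G is a difference of elements of M). *)
Definition sharp_integral_monoid (G : zmodType) (M : G -> Prop) : Prop :=
  [/\ M 0,
      (forall a b, M a -> M b -> M (a + b)),
      (forall a b, M a -> M b -> a + b = 0 -> a = 0) &
      (forall x, exists a b, [/\ M a, M b & x = a - b])].

(* x / m := the k with x = k m (in <m>), and 0 if there is no such k.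
   (For m in M \ {0} such a k is unique.) *)
Definition qdiv (G : zmodType) (x m : G) : int :=
  match excluded_middle_informative (exists k : int, x = m *~ k) with
  | left H => proj1_sig (constructive_indefinite_description _ H)
  | right _ => 0
  end.

Record mgraph (G : zmodType) := MGraph {
  gX : finType;
  gr : gX -> gX;
  gi : gX -> gX;
  gl : gX -> G }.

Arguments gr {G}.
Arguments gi {G}.
Arguments gl {G}.

Section Graphs.
Variable G : zmodType.
Implicit Type Gm : mgraph G.

Definition isV Gm (x : gX Gm) : bool := gr Gm x == x.

Definition adj Gm : rel (gX Gm) :=
  fun x y => [|| y == gr Gm x, x == gr Gm y | y == gi Gm x].

Definition Mmetrised (M : G -> Prop) Gm : Prop :=
  [/\ (forall x, gr Gm (gr Gm x) = gr Gm x),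
      (forall x, gi Gm (gi Gm x) = x),
      (forall x, gi Gm x = x <-> gr Gm x = x),
      (0 < #|gX Gm|)%N &
      (forall x y, connect (@adj Gm) x y)] /\
  [/\ (forall x, M (gl Gm x)),
      (forall x, gl Gm (gi Gm x) = gl Gm x) &
      (forall x, gl Gm x = 0 <-> isV x)].

Definition isDiv Gm (D : gX Gm -> int) : Prop := forall x, ~~ isV x -> D x = 0.
Definition effective Gm (D : gX Gm -> int) : Prop := forall x, 0 <= D x.
Definition degree Gm (D : gX Gm -> int) : int := \sum_(x : gX Gm | isV x) D x.

Definition isPL Gm (g : gX Gm -> G) : Prop :=
  forall e, ~~ isV e ->
    exists k : int, g (gr Gm e) - g (gr Gm (gi Gm e)) = gl Gm e *~ k.

Definition Lap Gm (g : gX Gm -> G) (x : gX Gm) : int :=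
  if isV x then
    \sum_(e : gX Gm | (gr Gm e == x) && ~~ isV e)
       qdiv (g x - g (gr Gm (gi Gm e))) (gl Gm e)
  else 0.

Definition isPrin Gm (D : gX Gm -> int) : Prop :=
  exists g : gX Gm -> G, isPL g /\ forall x, D x = Lap g x.

Definition linsys_nonempty Gm (D : gX Gm -> int) : Prop :=
  exists E : gX Gm -> int, [/\ isDiv E, effective E & isPrin (fun x => E x - D x)].

Definition rank_ok Gm (D : gX Gm -> int) (k : int) : Prop :=
  forall F : gX Gm -> int, isDiv F -> effective F -> degree F = k ->
    linsys_nonempty (fun x => D x - F x).

Definition is_rank Gm (D : gX Gm -> int) (n : int) : Prop :=
  rank_ok D n /\ forall k, rank_ok D k -> k <= n.

Definition is_morphism Gm Gm' (phi : gX Gm -> gX Gm') : Prop :=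
  (forall v, isV v -> isV (phi v)) /\
  forall e, ~~ isV e ->
    (~~ isV (phi e) ->
       [/\ phi (gr Gm e) = gr Gm' (phi e),
           phi (gr Gm (gi Gm e)) = gr Gm' (gi Gm' (phi e)) &
           exists k : int, gl Gm' (phi e) = gl Gm e *~ k]) /\
    (isV (phi e) ->
       phi (gr Gm e) = phi e /\ phi (gr Gm (gi Gm e)) = phi e).

Definition slope Gm Gm' (phi : gX Gm -> gX Gm') (e : gX Gm) : int :=
  if ~~ isV (phi e) then qdiv (gl Gm' (phi e)) (gl Gm e) else 0.

Definition mloc Gm Gm' (phi : gX Gm -> gX Gm') (v : gX Gm) (e' : gX Gm') : int :=
  \sum_(e : gX Gm | [&& gr Gm e == v, ~~ isV e & phi e == e']) slope phi e.

Definition harmonic Gm Gm' (phi : gX Gm -> gX Gm') : Prop :=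
  forall v, isV v -> forall e1 e2,
    gr Gm' e1 = phi v -> ~~ isV e1 -> gr Gm' e2 = phi v -> ~~ isV e2 ->
    mloc phi v e1 = mloc phi v e2.

(* m_phi(v): the common value (computed at some half-edge at phi(v));
   convention 1 if H'_{phi(v)} is empty (only when Gm' is a single point). *)
Definition mult Gm Gm' (phi : gX Gm -> gX Gm') (v : gX Gm) : int :=
  match [pick e' | (gr Gm' e' == phi v) && ~~ isV e'] with
  | Some e' => mloc phi v e'
  | None => 1
  end.

Definition non_degenerate Gm Gm' (phi : gX Gm -> gX Gm') : Prop :=
  forall v, isV v -> 0 < mult phi v.

Definition pullback Gm Gm' (phi : gX Gm -> gX Gm') (D' : gX Gm' -> int)
  (x : gX Gm) : int :=
  if isV x then D' (phi x) * mult phi x else 0.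

End Graphs.

(* Main.v *)
Require Import Defs.
From mathcomp Require Import all_boot all_order all_algebra.
From mathcomp Require Import zify.
From Stdlib Require Import ClassicalEpsilon Classical.
Set Implicit Arguments. Unset Strict Implicit. Unset Printing Implicit Defensive.
Import Order.TTheory GRing.Theory Num.Theory.
Local Open Scope ring_scope.

Section Mon.
Variables (G : zmodType) (M : G -> Prop) (HM : sharp_integral_monoid M).

Lemma M_muln m n : M m -> M (m *+ n).
Proof.
case: HM => H0 Hadd _ _ Hm; elim: n => [|n IH]; first by rewrite mulr0n.
by rewrite mulrS; apply: Hadd.
Qed.

Lemma tfree m z : M m -> m != 0 -> m *~ z = 0 -> z = 0.
Proof.
move=> Hm m0.
have key : forall n : nat, m *+ n.+1 = 0 -> False.
  move=> n; rewrite mulrS => H; case: HM => _ _ Hsh _.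
  by move: (Hsh _ _ Hm (M_muln n Hm) H) => E; rewrite E eqxx in m0.
case: z => [[|n]|n] //.
- by move/key.
- rewrite NegzE mulrNz => /eqP; rewrite oppr_eq0 => /eqP /key.
  done.
Qed.

Lemma qdivE x m k : M m -> m != 0 -> x = m *~ k -> qdiv x m = k.
Proof.
move=> Hm m0 Hx; rewrite /qdiv; case: excluded_middle_informative => [H|H];
  last by exfalso; apply: H; exists k.
case: constructive_indefinite_description => k' /= Hk'.
apply/eqP; rewrite eq_sym -subr_eq0; apply/eqP; apply: (tfree Hm m0).
by rewrite mulrzBr -Hk' -Hx subrr.
Qed.

Lemma max_exists (P : int -> Prop) (B : int) : P (-1) ->
  (forall k, P k -> k <= B) -> exists n, P n /\ forall k, P k -> k <= n.
Proof.
move=> P1 HB.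
suff H : forall N : nat, forall c, P c -> (forall k, P k -> k <= c + N%:Z) ->
    exists n, P n /\ forall k, P k -> k <= n.
  have := H (absz (B + 1)) _ P1; apply => k /HB; lia.
elim=> [|N IH] c Pc Hc.
  by exists c; split => // k /Hc; rewrite addr0.
case: (classic (exists k, P k /\ c < k)) => [[k [Pk ck]]|Hn].
  apply: (IH k Pk) => k' /Hc; lia.
exists c; split => // k Pk; rewrite leNgt; apply/negP => ck; apply: Hn; by exists k.
Qed.

End Mon.
Section Graph.
Variables (G : zmodType) (M : G -> Prop) (HM : sharp_integral_monoid M).
Variables (Gm : mgraph G) (HGm : Mmetrised M Gm).

Lemma vertex_gr x : isV (gr Gm x).
Proof. by case: HGm => [[Hr _ _ _ _] _]; rewrite /isV Hr. Qed.

Lemma gi_inv x : gi Gm (gi Gm x) = x.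
Proof. by case: HGm => [[_ Hi _ _ _] _]. Qed.

Lemma isV_gi x : isV (gi Gm x) = isV x.
Proof.
case: HGm => [[Hr Hi Hir _ _] _]; rewrite /isV.
apply/eqP/eqP => H.
- have H1 := proj2 (Hir (gi Gm x)) H.
  apply/(Hir x); by rewrite -{1}H1 Hi.
- have H1 := proj2 (Hir x) H.
  by apply/(Hir (gi Gm x)); rewrite Hi H1.
Qed.

Lemma gl_M x : M (gl Gm x).
Proof. by case: HGm => [_ [H _ _]]. Qed.

Lemma gl_gi x : gl Gm (gi Gm x) = gl Gm x.
Proof. by case: HGm => [_ [_ H _]]. Qed.

Lemma gl_nz x : ~~ isV x -> gl Gm x != 0.
Proof. by case: HGm => [_ [_ _ H]] Hx; apply/eqP => /H; apply/negP. Qed.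

Lemma qdivE_gl y x k : ~~ isV x -> y = gl Gm x *~ k -> qdiv y (gl Gm x) = k.
Proof. move=> Hx; exact: (qdivE HM (gl_M x) (gl_nz Hx)). Qed.

Lemma deg_prin (g : gX Gm -> G) : isPL g -> \sum_(x | isV x) Lap g x = 0.
Proof.
move=> Hg.
set q := fun e => qdiv (g (gr Gm e) - g (gr Gm (gi Gm e))) (gl Gm e).
have -> : \sum_(x | isV x) Lap g x = \sum_(e | ~~ isV e) q e.
  rewrite [RHS](partition_big (gr Gm) (fun x : gX Gm => isV x)) /=; last by move=> e _; exact: vertex_gr.
  apply: eq_bigr => x Vx; rewrite /Lap Vx; apply: eq_big => [e|e /andP[/eqP <- _]] //.
  by rewrite andbC.
have Hq : forall e, ~~ isV e -> q (gi Gm e) = - q e.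
  move=> e He; have [k Hk] := Hg e He.
  rewrite /q (qdivE_gl He Hk) gi_inv gl_gi; apply: qdivE_gl => //.
  by rewrite mulrNz -Hk opprB.
set S := \sum_(e | ~~ isV e) q e.
have : S = - S.
  rewrite {1}/S (reindex_inj (can_inj gi_inv)) /= -sumrN.
  by apply: eq_big => [e|e He]; rewrite ?isV_gi // Hq // -isV_gi.
lia.
Qed.

Lemma vertex_exists : exists v : gX Gm, isV v.
Proof.
case: HGm => [[_ _ _ H _] _]; case/card_gt0P: H => x _.
by exists (gr Gm x); apply: vertex_gr.
Qed.

Lemma degree_ge0 (F : gX Gm -> int) : effective F -> 0 <= degree F.
Proof. by move=> HF; apply: sumr_ge0 => x _; apply: HF. Qed.

Lemma rank_bound (D : gX Gm -> int) k : rank_ok D k -> k <= Num.max (degree D) 0.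
Proof.
move=> Hk; case: (ltP k 0) => [k0|k0]; first by rewrite le_max; apply/orP; right; apply: ltW.
have [v0 Hv0] := vertex_exists.
pose F x : int := if x == v0 then k else 0.
have [|||E [HEd HEe [g [Hg HgE]]]] := Hk F.
- by move=> x Hx; rewrite /F; case: eqP => // Ex; rewrite Ex Hv0 in Hx.
- by move=> x; rewrite /F; case: eqP.
- rewrite /degree (bigD1 v0) //= /F eqxx big1 ?addr0 // => x /andP[_ /negbTE ->] //.
have H0 := deg_prin Hg.
have : \sum_(x | isV x) (E x - (D x - F x)) = 0.
  by etransitivity; last exact: H0; apply: eq_bigr => x _; rewrite HgE.
rewrite big_split /= sumrN big_split /= sumrN => HH.
have HdF : degree F = k.
  rewrite /degree (bigD1 v0) //= /F eqxx big1 ?addr0 // => x /andP[_ /negbTE ->] //.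
have := degree_ge0 HEe; rewrite /degree => HE.
rewrite le_max; apply/orP; left. rewrite /degree in HdF. move: HH HE HdF; move: (\sum_(i | isV i) E i) (\sum_(i | isV i) D i) (\sum_(i | isV i) F i) => a b c. lia.
Qed.

Lemma rank_exists (D : gX Gm -> int) : exists n, is_rank D n.
Proof.
have H1 : rank_ok D (-1).
  by move=> F _ HF Hd; have := degree_ge0 HF; rewrite Hd.
have [n [Hn1 Hn2]] := max_exists H1 (@rank_bound D).
by exists n.
Qed.

End Graph.
Section Pull.
Variables (G : zmodType) (M : G -> Prop) (HM : sharp_integral_monoid M).
Variables (Gm Gm' : mgraph G) (HGm : Mmetrised M Gm) (HGm' : Mmetrised M Gm').
Variables (phi : gX Gm -> gX Gm') (Hphi : is_morphism phi)
  (Hharm : harmonic phi) (Hnd : non_degenerate phi).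

Lemma phiV v : isV v -> isV (phi v).
Proof. by case: Hphi => H _; apply: H. Qed.

Lemma mult_mloc v e' : isV v -> gr Gm' e' = phi v -> ~~ isV e' ->
  mult phi v = mloc phi v e'.
Proof.
move=> Hv He1 He2; rewrite /mult; case: pickP => [e'' /andP[/eqP h1 h2]|H].
  by apply: Hharm.
by move: (H e'); rewrite He1 eqxx He2.
Qed.

Lemma PL_comp (g : gX Gm' -> G) : isPL g -> isPL (fun x => g (phi x)).
Proof.
move=> Hg e He; case: Hphi => _ /(_ e He) [H1 H2].
case: (boolP (isV (phi e))) => Hpe.
  by have [-> ->] := H2 Hpe; exists 0; rewrite subrr mulr0z.
have [-> -> [k Hk]] := H1 Hpe.
have [k' Hk'] := Hg _ Hpe.
by exists (k * k'); rewrite Hk' Hk mulrzA.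
Qed.

Lemma Lap_comp (g : gX Gm' -> G) x : isPL g ->
  Lap (fun x => g (phi x)) x = pullback phi (Lap g) x.
Proof.
move=> Hg; rewrite /pullback /Lap; case: (boolP (isV x)) => Hx //.
rewrite (phiV Hx).
set T := fun e' => qdiv (g (gr Gm' e') - g (gr Gm' (gi Gm' e'))) (gl Gm' e').
rewrite (bigID (fun e => isV (phi e))) /= big1 ?add0r; last first.
  move=> e /andP[/andP[/eqP Hex He] Hpe].
  case: Hphi => _ /(_ e He) [_ /(_ Hpe) [H1 H2]].
  by apply: (qdivE_gl HM HGm He); rewrite -Hex H1 H2 subrr mulr0z.
have step : forall e, (gr Gm e == x) && ~~ isV e && ~~ isV (phi e) ->
    qdiv (g (phi x) - g (phi (gr Gm (gi Gm e)))) (gl Gm e) = T (phi e) * slope phi e.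
  move=> e /andP[/andP[/eqP Hex He] Hpe].
  case: Hphi => _ /(_ e He) [/(_ Hpe) [H1 H2 [k Hk]] _].
  have [k' Hk'] := Hg _ Hpe.
  rewrite /T /slope Hpe (qdivE_gl HM HGm' Hpe Hk') (qdivE_gl HM HGm He Hk).
  apply: (qdivE_gl HM HGm He).
  by rewrite -Hex H1 H2 Hk' Hk -mulrzA mulrC.
rewrite (eq_bigr _ step).
rewrite (partition_big phi (fun e' => (gr Gm' e' == phi x) && ~~ isV e')) /=; last first.
  move=> e /andP[/andP[/eqP Hex He] Hpe].
  case: Hphi => _ /(_ e He) [/(_ Hpe) [H1 H2 _] _].
  by rewrite -H1 Hex eqxx Hpe.
rewrite mulr_suml; apply: eq_bigr => e' /andP[/eqP He'1 He'2].
rewrite (mult_mloc Hx He'1 He'2) /mloc mulr_sumr.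
apply: eq_big => [e /=|e /andP[_ /eqP ->]]; last by rewrite /T -He'1.
case Hpe: (phi e == e'); last by rewrite !andbF.
by rewrite (eqP Hpe) He'2 !andbT.
Qed.

End Pull.
Unset Implicit Arguments.

Theorem lemma3p7 (G : zmodType) (M : G -> Prop)
  (HM : sharp_integral_monoid M)
  (Gm Gm' : mgraph G) (HGm : Mmetrised M Gm) (HGm' : Mmetrised M Gm')
  (phi : gX Gm -> gX Gm') (Hphi : is_morphism phi)
  (Hharm : harmonic phi) (Hnd : non_degenerate phi)
  (D' : gX Gm' -> int) (HD'div : isDiv D') (HD'eff : effective D') :
  exists n n' : int,
    [/\ is_rank (pullback phi D') n, is_rank D' n' & n' <= n].
Proof.
have [n Hn] := rank_exists HM HGm (pullback phi D').
have [n' Hn'] := rank_exists HM HGm' D'.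
exists n, n'; split => //.
apply: (proj2 Hn) => F HF HFe HFd.
pose pushF (y : gX Gm') : int :=
  if isV y then \sum_(x | isV x && (phi x == y)) F x else 0.
have [||| E' [HE'div HE'eff [g [Hg HgE]]]] := proj1 Hn' pushF.
- by move=> y Hy; rewrite /pushF (negbTE Hy).
- move=> y; rewrite /pushF; case: ifP => // _; apply: sumr_ge0 => x _; exact: HFe.
- rewrite -HFd /degree [RHS](partition_big phi (fun y : gX Gm' => isV y)) /=;
    last by move=> x; apply: phiV.
  by apply: eq_bigr => y Hy; rewrite /pushF Hy.
exists (fun x => pullback phi E' x + pullback phi pushF x - F x); split.
- move=> x Hx; rewrite /pullback (negbTE Hx) HF //.
- move=> x; rewrite /pullback; case: (boolP (isV x)) => Hx; last by rewrite HF // subrr.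
  have Hm := Hnd x Hx.
  have H1 : 0 <= E' (phi x) by apply: HE'eff.
  have H2 : F x <= pushF (phi x).
    rewrite /pushF (phiV Hphi Hx) (bigD1 x) ?Hx ?eqxx //= lerDl.
    by apply: sumr_ge0 => y _; apply: HFe.
  have H3 := HFe x.
  move: Hm H1 H2 H3; move: (mult phi x) (E' (phi x)) (pushF (phi x)) (F x) => a b c d.
  nia.
- exists (fun x => g (phi x)); split; first exact: PL_comp.
  move=> x; rewrite (Lap_comp HM HGm HGm' Hphi Hharm x Hg) /pullback -HgE.
  case: (isV x); nia.
Qed.
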